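(* Let $P$ be a rooted forest on $[n]$ with natural labeling and let $\mathcal{M}^{\hat\partial}$ be the monoid of maps $\mathcal{L}(P)\to\mathcal{L}(P)$ generated by $\hat\partial_1,\dots,\hat\partial_n$. If $x\in\mathcal{M}^{\hat\partial}$ is idempotent ($x^2=x$), then $\operatorname{Rfactor}(x)=I_x$.
   Context: A rooted forest is a disjoint union of rooted trees, a rooted tree being a connected finite poset in which each element is covered by at most one element. $\mathcal{L}(P)=\{\pi\in S_n : i\prec j \Rightarrow \pi^{-1}_i<\pi^{-1}_j\}$ in one-line notation. $\pi\tau_i$ ($1\le i<n$) swaps $\pi_i,\pi_{i+1}$ if incomparable and is $\pi$ otherwise; $\partial_j=\tau_j\cdots\tau_{n-1}$; $\hat\partial_i$ is defined by $\pi\hat\partial_i=\pi\partial_{\pi^{-1}_i}$. Maps act on the right and compose as $\pi(xy)=(\pi x)y$; the monoid contains the identity. For $x\in\mathcal{M}^{\hat\partial}$: $\operatorname{im}(x)=\{\pi x:\pi\in\mathcal{L}(P)\}$; $\operatorname{rfactor}(x)$ is the longest word $u$ such that every element of $\operatorname{im}(x)$ (as a word $\pi_1\cdots\pi_n$) ends with $u$; $\operatorname{Rfactor}(x)$ is the set of letters of $\operatorname{rfactor}(x)$; $I_x=\{i\in[n]:\hat\partial_i x=x\}$. *)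

(* Defs.v *)
From mathcomp Require Import all_boot.
Set Implicit Arguments. Unset Strict Implicit. Unset Printing Implicit Defensive.

(* Labels: the ground set [n] = {1,...,n} is represented by 'I_n = {0,...,n-1}
   (label k+1 of the paper is k here); positions in one-line notation are
   0-based as well. *)

Section Defs.
Variable n : nat.
Variable R : rel 'I_n.  (* R i j  means  i <= j in the poset P *)

Definition is_porder : Prop :=
  reflexive R /\ antisymmetric R /\ transitive R.

Definition plt (i j : 'I_n) : bool := (i != j) && R i j.

Definition covers (i j : 'I_n) : bool :=
  plt i j && [forall k, ~~ (plt i k && plt k j)].

Definition rooted_forest : Prop :=
  forall i : 'I_n, #|[set j | covers i j]| <= 1.

Definition natural_labeling : Prop :=
  forall i j : 'I_n, plt i j -> (i < j)%N.

Definition comparable (a b : 'I_n) : bool := R a b || R b a.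

(* a word (one-line notation) pi_1 ... pi_n as a sequence; pi^{-1}_i is
   index i pi (0-based position) *)
Definition linext (pi : seq 'I_n) : Prop :=
  perm_eq pi (enum 'I_n) /\
  forall i j : 'I_n, plt i j -> (index i pi < index j pi)%N.

(* pi tau_p : swap positions p and p+1 (0-based) if the entries are
   incomparable, otherwise do nothing *)
Fixpoint tau (p : nat) (s : seq 'I_n) : seq 'I_n :=
  match p, s with
  | 0, a :: b :: s' => if comparable a b then s else b :: a :: s'
  | p'.+1, a :: s' => a :: tau p' s'
  | _, _ => s
  end.

(* pi partial_p = pi tau_p tau_{p+1} ... tau_{n-2}  (0-based; this is the
   paper's partial_{p+1} = tau_{p+1} ... tau_{n-1}), maps acting on the right *)
Definition partial (p : nat) (s : seq 'I_n) : seq 'I_n :=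
  foldl (fun t k => tau k t) s (iota p (n.-1 - p)).

Definition hatpartial (i : 'I_n) (s : seq 'I_n) : seq 'I_n :=
  partial (index i s) s.

(* An element of the monoid M^{hatpartial} is given by a word
   [:: i1; ...; ik] standing for hatpartial_{i1} ... hatpartial_{ik}
   (the empty word is the identity); right action: pi (xy) = (pi x) y. *)
Definition act (w : seq 'I_n) (s : seq 'I_n) : seq 'I_n :=
  foldl (fun t i => hatpartial i t) s w.

Definition idempotent_word (w : seq 'I_n) : Prop :=
  forall pi, linext pi -> act w (act w pi) = act w pi.

Definition common_suffix (w u : seq 'I_n) : Prop :=
  forall pi, linext pi -> suffix u (act w pi).

Definition is_rfactor (w u : seq 'I_n) : Prop :=
  common_suffix w u /\
  forall v, common_suffix w v -> (size v <= size u)%N.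

Definition in_I (w : seq 'I_n) (i : 'I_n) : Prop :=
  forall pi, linext pi -> act w (hatpartial i pi) = act w pi.

End Defs.

(* Main.v *)
Require Import Defs.
From mathcomp Require Import all_boot zify.
Set Implicit Arguments. Unset Strict Implicit. Unset Printing Implicit Defensive.


Section SeqFacts.
Variable T : eqType.
Implicit Types s t : seq T.

Definition bef s (a b : T) : bool := index a s < index b s.

Lemma bef_cons x s a b : a != x -> b != x -> bef (x :: s) a b = bef s a b.
Proof. by rewrite /bef /= eq_sym => /negbTE -> ; rewrite eq_sym => /negbTE ->. Qed.

Lemma bef_headL x s b : bef (x :: s) x b = (x != b).
Proof. by rewrite /bef /= eqxx; case: eqP. Qed.

Lemma bef_headR x s a : bef (x :: s) a x = false.
Proof. by rewrite /bef /= eqxx ltn0. Qed.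

Lemma bef_irr s a : bef s a a = false.
Proof. by rewrite /bef ltnn. Qed.

Lemma bef_total s a b : a \in s -> b \in s -> a != b -> bef s a b = ~~ bef s b a.
Proof.
move=> ha hb nab; rewrite /bef -leqNgt ltn_neqAle.
have -> // : index a s != index b s.
by apply: contra nab => /eqP E; rewrite -(nth_index a ha) E nth_index.
Qed.

Lemma bef_filter (P : pred T) s a b : P a -> P b ->
  bef (filter P s) a b = bef s a b.
Proof.
move=> Pa Pb; elim: s => [|x s IH] //=.
case Px: (P x).
  case: (eqVneq x a) => [<-|xa].
    by rewrite !bef_headL.
  case: (eqVneq x b) => [<-|xb].
    by rewrite !bef_headR.
  by rewrite !bef_cons 1?eq_sym.
have xa : a != x by apply/eqP=> E; rewrite -E Pa in Px.
have xb : b != x by apply/eqP=> E; rewrite -E Pb in Px.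
by rewrite bef_cons.
Qed.

Lemma eq_from_bef s1 s2 : uniq s1 -> uniq s2 -> s1 =i s2 ->
  (forall a b, a \in s1 -> b \in s1 -> bef s1 a b = bef s2 a b) -> s1 = s2.
Proof.
elim: s1 s2 => [|x r IH] [|y r2] //=.
- by move=> _ _ /(_ y); rewrite inE eqxx.
- by move=> _ _ /(_ x); rewrite inE eqxx.
move=> /andP[xr ur] /andP[yr2 ur2] Emem Hb.
have xy : x = y.
  apply/eqP; apply/negPn/negP=> nxy.
  have yin : y \in x :: r by rewrite Emem inE eqxx.
  move: (Hb x y); rewrite inE eqxx => /(_ isT yin).
  by rewrite bef_headL bef_headR nxy.
subst y; congr (_ :: _); apply: IH => //.
  move=> z; move: (Emem z); rewrite !inE.
  case: (eqVneq z x) => [->|] //=; by rewrite (negbTE xr) (negbTE yr2).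
move=> a b ha hb.
have ax : a != x by apply: contraNneq xr => <-.
have bx : b != x by apply: contraNneq xr => <-.
by move: (Hb a b); rewrite !inE ha hb !orbT !bef_cons // => ->.
Qed.


Lemma split_bef (P : pred T) s : uniq s ->
  (forall y z, y \in s -> z \in s -> ~~ P y -> P z -> bef s y z) ->
  s = filter (predC P) s ++ filter P s.
Proof.
elim: s => [|x r IH] //= /andP[xr ur] H.
case Px: (P x) => /=.
  have hP : forall y, y \in r -> P y.
    move=> y yr; apply/negPn/negP=> nPy.
    have := H y x; rewrite !inE eqxx yr orbT => /(_ isT isT nPy Px).
    by rewrite bef_headR.
  have -> : filter (predC P) r = [::].
    rewrite (eq_in_filter (a2 := pred0)); first exact: filter_pred0.
    by move=> y /hP /= ->.
  congr (_ :: _).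
  by apply/esym/all_filterP/allP => y /hP.
congr (_ :: _); apply: IH => // y z yr zr nPy Pz.
have yx : y != x by apply: contraNneq xr => <-.
have zx : z != x by apply: contraNneq xr => <-.
by rewrite -(bef_cons _ yx zx); apply: H; rewrite // inE ?yr ?zr orbT.
Qed.

Lemma suffix_same_len (a1 a2 d1 d2 : seq T) : a1 ++ d1 = a2 ++ d2 ->
  size d1 <= size d2 -> d1 = drop (size d2 - size d1) d2.
Proof.
move=> E hle.
have Es : size a1 + size d1 = size a2 + size d2 by rewrite -!size_cat E.
have -> : size d2 - size d1 = size a1 - size a2 by lia.
have -> : d1 = drop (size a1) (a2 ++ d2) by rewrite -E drop_size_cat.
rewrite drop_cat.
have -> // : size a1 < size a2 = false.
apply/negbTE; rewrite -leqNgt; lia.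
Qed.
End SeqFacts.


Section Poset.
Variable n : nat.
Variable R : rel 'I_n.
Hypothesis HP : is_porder R.
Hypothesis Hforest : rooted_forest R.
Hypothesis Hnat : natural_labeling R.

Lemma Rrefl a : R a a. Proof. by case: HP => h _; apply: h. Qed.
Lemma Rtrans a b c : R a b -> R b c -> R a c.
Proof. by case: HP => _ [_ h] ab bc; apply: h ab bc. Qed.
Lemma Ranti a b : R a b -> R b a -> a = b.
Proof. by case: HP => _ [h _] ab ba; apply: h; rewrite ab ba. Qed.

Lemma pltE a b : plt R a b = (a != b) && R a b. Proof. by []. Qed.
Lemma plt_R a b : plt R a b -> R a b. Proof. by case/andP. Qed.
Lemma plt_neq a b : plt R a b -> a != b. Proof. by case/andP. Qed.
Lemma plt_lt a b : plt R a b -> (a < b)%N. Proof. exact: Hnat. Qed.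
Lemma plt_asym a b : plt R a b -> R b a = false.
Proof.
case/andP=> nab ab; apply/negbTE/negP=> ba.
by move: nab; rewrite (Ranti ab ba) eqxx.
Qed.
Lemma plt_trans a b c : plt R a b -> R b c -> plt R a c.
Proof.
move=> ab bc; rewrite /plt (Rtrans (plt_R ab) bc) andbT.
apply/eqP=> E; subst c; by rewrite (plt_asym ab) in bc.
Qed.
Lemma plt_transR a b c : R a b -> plt R b c -> plt R a c.
Proof.
move=> ab bc; rewrite /plt (Rtrans ab (plt_R bc)) andbT.
apply/eqP=> E; subst c; by rewrite (plt_asym bc) in ab.
Qed.

Lemma cover_exists z y : plt R z y -> exists p, covers R z p && R p y.
Proof.
move=> zy.
pose P := fun p => plt R z p && R p y.
have Py : P y by rewrite /P zy Rrefl.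
case: (arg_minnP (fun p : 'I_n => val p) Py) => p /andP[zp py] Hmin.
exists p; rewrite py andbT /covers zp /=.
apply/forallP=> k; apply/negP=> /andP[zk kp].
have Pk : P k by rewrite /P zk (Rtrans (plt_R kp) py).
by move: (Hmin k Pk); rewrite leqNgt (plt_lt kp).
Qed.

Lemma cover_uniq z p1 p2 : covers R z p1 -> covers R z p2 -> p1 = p2.
Proof.
move=> c1 c2; have /card_le1_eqP H := Hforest z.
have h1 : p1 \in [set j | covers R z j] by rewrite inE.
have h2 : p2 \in [set j | covers R z j] by rewrite inE.
by move: (H p1 p2 h1 h2) => /esym.
Qed.

Lemma FC z y c : R z y -> R z c -> R y c || R c y.
Proof.
have [k] := ubnP (n - z); elim: k z y c => [|k IH] z y c // lt zy zc.
case: (eqVneq z y) => [<-|nzy]; first by rewrite zc.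
case: (eqVneq z c) => [<-|nzc]; first by rewrite zy orbT.
have zy' : plt R z y by rewrite /plt nzy zy.
have zc' : plt R z c by rewrite /plt nzc zc.
have [p1 /andP[cp1 p1y]] := cover_exists zy'.
have [p2 /andP[cp2 p2c]] := cover_exists zc'.
have E := cover_uniq cp1 cp2; subst p2.
have zp : plt R z p1 by case/andP: cp1.
have lt' : n - p1 < k.
  have := plt_lt zp; have := ltn_ord p1; lia.
exact: IH lt' p1y p2c.
Qed.

Lemma chain_comp j a b : R j a -> R j b -> R a b || R b a.
Proof. exact: FC. Qed.

End Poset.


Section Bub.
Variable n : nat.
Variable R : rel 'I_n.
Hypothesis HP : is_porder R.
Hypothesis Hforest : rooted_forest R.
Hypothesis Hnat : natural_labeling R.

Fixpoint bub (z : 'I_n) (r : seq 'I_n) : seq 'I_n :=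
  match r with
  | [::] => [:: z]
  | y :: r' => if Defs.comparable R z y then z :: bub y r' else y :: bub z r'
  end.

Definition ordered (l : seq 'I_n) :=
  forall a b, a \in l -> b \in l -> plt R a b -> bef l a b.
Definition upc (l : seq 'I_n) := forall a b, a \in l -> plt R a b -> b \in l.

Lemma bub_perm z r : perm_eq (bub z r) (z :: r).
Proof.
elim: r z => [|y r IH] z //=; case: ifP => _; first by rewrite perm_cons.
apply: (perm_trans (y := y :: z :: r)); first by rewrite perm_cons.
by rewrite (perm_catCA [:: y] [:: z] r).
Qed.

Lemma bef_skip2 (x y : 'I_n) t a b : a != y -> b != y ->
  bef (x :: y :: t) a b = bef (x :: t) a b.
Proof.
rewrite /bef /= eq_sym => /negbTE -> ; rewrite eq_sym => /negbTE ->.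
by case: (x == a); case: (x == b).
Qed.

Lemma sub_comp z y r : uniq (z :: y :: r) -> ordered (z :: y :: r) ->
  upc (z :: y :: r) -> Defs.comparable R z y ->
  [/\ R z y, uniq (y :: r), ordered (y :: r), upc (y :: r) &
      forall c, R z c -> c != z -> R y c].
Proof.
move=> U O Up cmp.
have zy : z != y by move: U => /= /andP[]; rewrite inE negb_or => /andP[].
have zyR : R z y.
  case/orP: cmp => // yz; have pyz : plt R y z by rewrite /plt eq_sym zy yz.
  by move: (O y z); rewrite !inE !eqxx orbT bef_headR => /(_ isT isT pyz).
have U' : uniq (y :: r) by case/andP: U.
have O' : ordered (y :: r).
  move=> a b ha hb ab.
  have az : a != z by apply: contraTneq ha => ->; case/andP: U.
  have bz : b != z by apply: contraTneq hb => ->; case/andP: U.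
  by rewrite -(bef_cons _ az bz); apply: O; rewrite // inE ?ha ?hb orbT.
split => //.
- move=> a b ha ab.
  have : b \in z :: y :: r by apply: (Up a); rewrite // inE ha orbT.
  rewrite inE; case: (eqVneq b z) => //= E _; subst b.
  have ha' : a \in z :: y :: r by rewrite inE ha orbT.
  by move: (O a z ha' (mem_head _ _) ab); rewrite bef_headR.
- move=> c zc cz; case/orP: (FC HP Hforest Hnat zyR zc) => // cy.
  case: (eqVneq c y) => [->|ncy]; first exact: Rrefl.
  have pzc : plt R z c by rewrite /plt eq_sym cz zc.
  have pcy : plt R c y by rewrite /plt ncy cy.
  have cin : c \in z :: y :: r by apply: (Up z); rewrite ?inE ?eqxx.
  have yin : y \in z :: y :: r by rewrite !inE eqxx orbT.
  move: (O c y cin yin pcy).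
  by rewrite bef_cons ?bef_headR // eq_sym.
Qed.

Lemma sub_inc z y r : uniq (z :: y :: r) -> ordered (z :: y :: r) ->
  upc (z :: y :: r) -> ~~ Defs.comparable R z y ->
  [/\ uniq (z :: r), ordered (z :: r) & upc (z :: r)].
Proof.
move=> U O Up ncmp.
have zy : z != y by move: U => /= /andP[]; rewrite inE negb_or => /andP[].
have yr : y \notin r by move: U => /= /andP[_ /andP[]].
have ny : forall a, a \in z :: r -> a != y.
  move=> a; rewrite inE => /orP[/eqP->|ar]; first by [].
  by apply: contraTneq ar => ->.
split.
- by move: U => /= /andP[]; rewrite inE negb_or => /andP[_ ->] /andP[_ ->].
- move=> a b ha hb ab; rewrite -(bef_skip2 z r (y:=y)) ?ny //.
  by apply: O; rewrite // !inE; [move: ha | move: hb]; rewrite inE => /orP[->|->]; rewrite ?orbT.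
- move=> a b ha ab.
  have : b \in z :: y :: r.
    by apply: (Up a); rewrite // !inE; move: ha; rewrite inE => /orP[->|->]; rewrite ?orbT.
  rewrite !inE; case: (eqVneq b y) => [E|nby]; last by [].
  move=> _; rewrite {}E in ab; move: ha; rewrite inE => /orP[/eqP E|ar].
    by subst a; move: ncmp; rewrite /Defs.comparable (plt_R ab).
  have ain : a \in z :: y :: r by rewrite !inE ar !orbT.
  have yin : y \in z :: y :: r by rewrite !inE eqxx orbT.
  have := O a y ain yin ab.
  have az : a != z by apply: contraTneq ar => ->; move: U => /= /andP[]; rewrite inE negb_or => /andP[].
  by rewrite bef_cons ?bef_headR // eq_sym.
Qed.


Lemma mem_tail_ne (x : 'I_n) t a : a \in x :: t -> a != x -> a \in t.
Proof. by rewrite inE => /orP[/eqP->|//]; rewrite eqxx. Qed.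

Lemma mem_skip2 (x y : 'I_n) t a : a \in x :: y :: t -> a != y -> a \in x :: t.
Proof. by rewrite !inE => /orP[->//|/orP[/eqP->|->]]; rewrite ?eqxx ?orbT. Qed.

Lemma bub_cc z r : uniq (z :: r) -> ordered (z :: r) -> upc (z :: r) ->
  forall a b, a \in z :: r -> b \in z :: r -> R z a -> R z b ->
  bef (bub z r) a b = bef (z :: r) a b.
Proof.
elim: r z => [|y r IH] z U O Up a b ha hb za zb.
  by move: ha hb; rewrite !inE => /eqP-> /eqP->; rewrite !bef_irr.
rewrite /=; case: ifP => cmp.
  have [zy Uy Oy Upy chy] := sub_comp U O Up cmp.
  case: (eqVneq a z) => [->|az]; first by rewrite !bef_headL.
  case: (eqVneq b z) => [->|bz]; first by rewrite !bef_headR.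
  rewrite [LHS]bef_cons // [RHS]bef_cons //; apply: (IH y Uy Oy Upy a b).
  - exact: mem_tail_ne ha az.
  - exact: mem_tail_ne hb bz.
  - exact: chy.
  - exact: chy.
have [Uz Oz Upz] := sub_inc U O Up (negbT cmp).
have ay : a != y by apply: contraFneq cmp => <-; rewrite /Defs.comparable za.
have by' : b != y by apply: contraFneq cmp => <-; rewrite /Defs.comparable zb.
rewrite bef_cons // bef_skip2 //; apply: (IH z Uz Oz Upz a b) => //.
- exact: mem_skip2 ha ay.
- exact: mem_skip2 hb by'.
Qed.

Lemma bub_nn z r : uniq (z :: r) -> ordered (z :: r) -> upc (z :: r) ->
  forall a b, a \in z :: r -> b \in z :: r -> ~~ R z a -> ~~ R z b ->
  bef (bub z r) a b = bef (z :: r) a b.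
Proof.
elim: r z => [|y r IH] z U O Up a b ha hb za zb.
  by move: ha za; rewrite !inE => /eqP->; rewrite Rrefl.
have az : a != z by apply: contraNneq za => ->; apply: Rrefl.
have bz : b != z by apply: contraNneq zb => ->; apply: Rrefl.
rewrite /=; case: ifP => cmp.
  have [zy Uy Oy Upy chy] := sub_comp U O Up cmp.
  rewrite [LHS]bef_cons // [RHS]bef_cons //; apply: (IH y Uy Oy Upy a b).
  - exact: mem_tail_ne ha az.
  - exact: mem_tail_ne hb bz.
  - by apply: contra za => ya; apply: Rtrans zy ya.
  - by apply: contra zb => yb; apply: Rtrans zy yb.
have [Uz Oz Upz] := sub_inc U O Up (negbT cmp).
have yz : y != z by move: U => /= /andP[]; rewrite inE negb_or eq_sym => /andP[].
case: (eqVneq a y) => [->|ay].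
  rewrite bef_headL bef_cons // bef_headL //.
case: (eqVneq b y) => [->|by'].
  by rewrite bef_headR bef_cons // bef_headR.
rewrite bef_cons // bef_skip2 //; apply: (IH z Uz Oz Upz a b) => //.
- exact: mem_skip2 ha ay.
- exact: mem_skip2 hb by'.
Qed.

Lemma bub_cn z r : uniq (z :: r) -> ordered (z :: r) -> upc (z :: r) ->
  forall a b, a \in z :: r -> b \in z :: r -> R z a -> ~~ R z b ->
  bef (bub z r) a b = [exists c, plt R a c && bef (z :: r) c b].
Proof.
elim: r z => [|y r IH] z U O Up a b ha hb za zb.
  by move: hb zb; rewrite !inE => /eqP->; rewrite Rrefl.
have bz : b != z by apply: contraNneq zb => ->; apply: Rrefl.
rewrite /=; case: ifP => cmp.
  have [zy Uy Oy Upy chy] := sub_comp U O Up cmp.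
  have yz : y != z by move: U => /= /andP[]; rewrite inE negb_or eq_sym => /andP[].
  have yb : y != b by apply: contraNneq zb => <-.
  case: (eqVneq a z) => [->|az].
    rewrite bef_headL eq_sym bz; apply/esym/existsP; exists y.
    by rewrite /plt eq_sym yz zy bef_cons // bef_headL.
  rewrite bef_cons // (IH y Uy Oy Upy a b).
  - apply: eq_existsb => c; case ac: (plt R a c) => //=.
    have cz : c != z.
      by apply/eqP=> E; subst c; move: za; rewrite (plt_asym HP ac).
    by rewrite [RHS]bef_cons.
  - exact: mem_tail_ne ha az.
  - exact: mem_tail_ne hb bz.
  - exact: chy.
  - by apply: contra zb => yb'; apply: Rtrans zy yb'.
have [Uz Oz Upz] := sub_inc U O Up (negbT cmp).
have yz : y != z by move: U => /= /andP[]; rewrite inE negb_or eq_sym => /andP[].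
have ay : a != y by apply: contraFneq cmp => <-; rewrite /Defs.comparable za.
case: (eqVneq b y) => [->|by'].
  rewrite bef_headR; apply/esym/existsP => -[c /andP[ac cy]].
  case: (eqVneq c z) => [E|cz].
    by subst c; move: za; rewrite (plt_asym HP ac).
  by move: cy; rewrite bef_cons // bef_headR.
rewrite bef_cons // (IH z Uz Oz Upz a b) //.
- apply: eq_existsb => c; case ac: (plt R a c) => //=.
  have cy : c != y.
    apply: contraFneq cmp => E; subst c.
    by rewrite /Defs.comparable (Rtrans HP za (plt_R ac)).
  by rewrite bef_skip2.
- exact: mem_skip2 ha ay.
- exact: mem_skip2 hb by'.
Qed.

End Bub.


Section Hat.
Variable n : nat.
Variable R : rel 'I_n.
Hypothesis HP : is_porder R.
Hypothesis Hforest : rooted_forest R.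
Hypothesis Hnat : natural_labeling R.

Lemma tau_cat p (pre t : seq 'I_n) :
  tau R (size pre + p) (pre ++ t) = pre ++ tau R p t.
Proof. by elim: pre => [|x pre IH] //=; rewrite IH. Qed.

Lemma fold_bub (pre : seq 'I_n) z r :
  foldl (fun t k => tau R k t) (pre ++ z :: r) (iota (size pre) (size r))
  = pre ++ bub R z r.
Proof.
elim: r pre z => [|y r IH] pre z //=.
have := tau_cat 0 pre [:: z, y & r]; rewrite addn0 => ->.
rewrite /=; case: ifP => _.
- have := IH (rcons pre z) y; rewrite size_rcons cat_rcons => ->.
  by rewrite -cats1 -catA.
- have := IH (rcons pre y) z; rewrite size_rcons cat_rcons => ->.
  by rewrite -cats1 -catA.
Qed.

Lemma hat_dec i (s : seq 'I_n) : size s = n -> i \in s ->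
  hatpartial R i s = take (index i s) s ++ bub R i (drop (index i s).+1 s).
Proof.
move=> sz si; rewrite /hatpartial /partial.
set p := index i s.
have ps : p < size s by rewrite index_mem.
have Es : s = take p s ++ i :: drop p.+1 s.
  by rewrite -{1}(cat_take_drop p s) (drop_nth i ps) nth_index.
have szt : size (take p s) = p by rewrite size_take ps.
have -> : n.-1 - p = size (drop p.+1 s) by rewrite size_drop; lia.
rewrite {1}Es; have := fold_bub (take p s) i (drop p.+1 s); rewrite szt => -> //.
Qed.

Lemma bef_cat_pre (pre t1 t2 : seq 'I_n) a b : (a \in pre) || (b \in pre) ->
  bef (pre ++ t1) a b = bef (pre ++ t2) a b.
Proof.
rewrite /bef !index_cat.
case ha: (a \in pre); case hb: (b \in pre) => //= _.
- have := index_mem a pre; rewrite ha => h.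
  by rewrite (leq_trans h (leq_addr _ _)) (leq_trans h (leq_addr _ _)).
- have := index_mem b pre; rewrite hb => h.
  by rewrite !ltnNge !(leq_trans (ltnW h) (leq_addr _ _)).
Qed.

Lemma bef_cat_nin (pre t : seq 'I_n) a b : a \notin pre -> b \notin pre ->
  bef (pre ++ t) a b = bef t a b.
Proof.
by rewrite /bef !index_cat => /negbTE-> /negbTE->; rewrite ltn_add2l.
Qed.

Lemma bef_cat_in_nin (pre t : seq 'I_n) a b : a \in pre -> b \notin pre ->
  bef (pre ++ t) a b.
Proof.
rewrite /bef !index_cat => ha /negbTE->; rewrite ha.
have := index_mem a pre; rewrite ha; lia.
Qed.

Lemma bef_cat_nin_in (pre t : seq 'I_n) a b : a \notin pre -> b \in pre ->
  bef (pre ++ t) a b = false.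
Proof.
rewrite /bef !index_cat => /negbTE-> hb; rewrite hb.
have := index_mem b pre; rewrite hb; lia.
Qed.

Lemma linext_uniq s : linext R s -> uniq s.
Proof. by case=> /perm_uniq -> _; apply: enum_uniq. Qed.
Lemma linext_mem s a : linext R s -> a \in s.
Proof. by case=> /perm_mem -> _; rewrite mem_enum. Qed.
Lemma linext_size s : linext R s -> size s = n.
Proof. by case=> /perm_size -> _; rewrite size_enum_ord. Qed.
Lemma linext_bef s a b : linext R s -> plt R a b -> bef s a b.
Proof. by case=> _ H; apply: H. Qed.

Lemma linext_comp s a b : linext R s -> R a b -> a != b -> bef s a b.
Proof. by move=> L ab nab; apply: linext_bef; rewrite // /plt nab ab. Qed.

Section OneStep.
Variable s : seq 'I_n.
Hypothesis Ls : linext R s.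
Variable i : 'I_n.
Let p := index i s.
Let pre := take p s.
Let r := drop p.+1 s.
Let Es : s = pre ++ i :: r.
Proof.
have ps : p < size s by rewrite index_mem (linext_mem i Ls).
by rewrite -{1}(cat_take_drop p s) (drop_nth i ps) nth_index // (linext_mem i Ls).
Qed.
Let Us : uniq s := linext_uniq Ls.

Lemma hat_eq : hatpartial R i s = pre ++ bub R i r.
Proof. by rewrite hat_dec ?(linext_size Ls) ?(linext_mem i Ls). Qed.

Let szp : size pre = p.
Proof. by rewrite size_take index_mem (linext_mem i Ls). Qed.

Let in_pre a : (a \in pre) = (index a s < p).
Proof.
have E : index a s = if a \in pre then index a pre else size pre + index a (i :: r).
  by rewrite {1}Es index_cat.
rewrite E szp; case: ifP => h.
  by have := index_mem a pre; rewrite h szp => ->.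
by rewrite ltnNge leq_addr.
Qed.

Let chain_nin a : R i a -> a \notin pre.
Proof.
move=> ia; rewrite in_pre -leqNgt.
case: (eqVneq i a) => [<-|nia]; first by rewrite /p.
by apply: ltnW; apply: (linext_bef Ls); rewrite /plt nia.
Qed.

Let in_l a : a \notin pre -> a \in i :: r.
Proof.
move=> ap; have := linext_mem a Ls; rewrite {1}Es mem_cat (negbTE ap) //.
Qed.

Let Ul : uniq (i :: r).
Proof. by move: Us; rewrite {1}Es cat_uniq => /and3P[]. Qed.

Let bef_l a b : a \notin pre -> b \notin pre -> bef s a b = bef (i :: r) a b.
Proof. by move=> ha hb; rewrite {1}Es bef_cat_nin. Qed.

Let Ol : ordered R (i :: r).
Proof.
move=> a b ha hb ab.
have ap : a \notin pre by move: Us; rewrite {1}Es cat_uniq => /and3P[_ /hasPn H _]; apply: H.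
have bp : b \notin pre by move: Us; rewrite {1}Es cat_uniq => /and3P[_ /hasPn H _]; apply: H.
by rewrite -bef_l //; apply: linext_bef.
Qed.

Let Upl : upc R (i :: r).
Proof.
move=> a b ha ab; apply: in_l.
have ap : a \notin pre by move: Us; rewrite {1}Es cat_uniq => /and3P[_ /hasPn H _]; apply: H.
move: ap; rewrite !in_pre -!leqNgt => H; apply: (leq_trans H); apply: ltnW.
exact: linext_bef Ls ab.
Qed.

Lemma hat_perm : perm_eq (hatpartial R i s) s.
Proof. by rewrite hat_eq {1}Es perm_cat2l bub_perm. Qed.

Lemma hat_cc a b : R i a -> R i b -> bef (hatpartial R i s) a b = bef s a b.
Proof.
move=> ia ib; have ap := chain_nin ia; have bp := chain_nin ib.
rewrite hat_eq bef_cat_nin // bef_l // (bub_cc HP Hforest Hnat) //; exact: in_l.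
Qed.

Lemma hat_nn a b : ~~ R i a -> ~~ R i b -> bef (hatpartial R i s) a b = bef s a b.
Proof.
move=> ia ib; rewrite hat_eq.
case: (boolP ((a \in pre) || (b \in pre))) => H.
  by rewrite {1}Es; apply: bef_cat_pre.
move: H; rewrite negb_or => /andP[ap bp].
rewrite bef_cat_nin // bef_l // (bub_nn HP Hforest Hnat) //; exact: in_l.
Qed.

Lemma hat_cn a b : R i a -> ~~ R i b ->
  bef (hatpartial R i s) a b = [exists c, plt R a c && bef s c b].
Proof.
move=> ia ib; have ap := chain_nin ia; rewrite hat_eq.
case: (boolP (b \in pre)) => bp.
  rewrite bef_cat_nin_in //; apply/esym/existsP => -[c /andP[ac cb]].
  have cp : c \notin pre by apply: chain_nin; exact: (Rtrans HP ia (plt_R ac)).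
  by move: cb; rewrite {1}Es bef_cat_nin_in.
rewrite bef_cat_nin // (bub_cn HP Hforest Hnat) //; try exact: in_l.
apply: eq_existsb => c; case ac: (plt R a c) => //=.
have cp : c \notin pre by apply: chain_nin; exact: (Rtrans HP ia (plt_R ac)).
by rewrite bef_l.
Qed.

Lemma hat_pre : take p (hatpartial R i s) = pre.
Proof.
rewrite hat_eq take_size_cat // size_take index_mem (linext_mem i Ls) //.
Qed.

Lemma hat_linext : linext R (hatpartial R i s).
Proof.
split; first by apply: (perm_trans hat_perm); case: Ls.
move=> a b ab; change (bef (hatpartial R i s) a b).
case: (boolP (R i a)) => ia; case: (boolP (R i b)) => ib.
- by rewrite hat_cc //; apply: linext_bef.
- by move: ib; rewrite (Rtrans HP ia (plt_R ab)).
- have L' : forall x, x \in hatpartial R i s by move=> x; rewrite (perm_mem hat_perm) (linext_mem x Ls).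
  rewrite bef_total ?L' ?(plt_neq ab) // hat_cn //.
  apply/negP=> /existsP[c /andP[bc cs]].
  have ac : plt R a c := plt_trans HP ab (plt_R bc).
  move: (linext_bef Ls ac); rewrite bef_total ?(linext_mem _ Ls) ?(plt_neq ac) //.
  by rewrite cs.
- by rewrite hat_nn //; apply: linext_bef.
Qed.

End OneStep.
End Hat.


Section GLemma.
Variable n : nat.
Variable R : rel 'I_n.
Hypothesis HP : is_porder R.
Hypothesis Hnat : natural_labeling R.
Variables (S : Type) (st : 'I_n -> S -> S) (Inv : S -> Prop) (Good : S -> 'I_n -> Prop)
  (Q : pred 'I_n).
Hypothesis HInv : forall j s, Q j -> Inv s -> Inv (st j s).
Hypothesis S1 : forall j s z, Q j -> Inv s -> ~~ R j z -> Good s z -> Good (st j s) z.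
Hypothesis S2 : forall j s a, Q j -> Inv s -> R j a ->
  (forall c, plt R a c -> Good s c) -> Good (st j s) a.

Definition Gd s z := forall c, R z c -> Good s c.

Lemma Gd_mono j s z : Q j -> Inv s -> Gd s z -> Gd (st j s) z.
Proof.
move=> Qj Is H c zc; case: (boolP (R j c)) => jc.
  by apply: S2 => // c' cc'; apply: H; exact: (Rtrans HP zc (plt_R cc')).
by apply: S1 => //; apply: H.
Qed.

Lemma Gd_fold_mono w s z : all Q w -> Inv s -> Gd s z ->
  Gd (foldl (fun t j => st j t) s w) z.
Proof.
elim: w s => [|j w IH] s //= /andP[Qj Qw] Is H.
by apply: IH => //; [apply: HInv | apply: Gd_mono].
Qed.

Lemma Gd_ok j s : Q j -> Inv s -> (forall z, Gd (st j s) z -> Gd s z) ->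
  forall a, R j a -> Gd s a.
Proof.
move=> Qj Is Hsub a.
have [k] := ubnP (n - a); elim: k a => [|k IH] a // lt ja.
apply: Hsub => c ac.
case: (eqVneq a c) => [<-|nac].
  apply: S2 => // c' ac'.
  have lt' : n - c' < k by have := plt_lt Hnat ac'; have := ltn_ord c'; lia.
  by apply: (IH c' lt' (Rtrans HP ja (plt_R ac'))); exact: (Rrefl HP _).
have pac : plt R a c by rewrite /plt nac.
have lt' : n - c < k by have := plt_lt Hnat pac; have := ltn_ord c; lia.
apply: (Gd_mono Qj Is (IH c lt' (Rtrans HP ja ac))); exact: (Rrefl HP _).
Qed.

Lemma G_main w s : all Q w -> Inv s ->
  (forall z, Gd (foldl (fun t j => st j t) s w) z -> Gd s z) ->
  forall j a, j \in w -> R j a -> Gd s a.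
Proof.
elim: w s => [|j w IH] s //= /andP[Qj Qw] Is Hsub.
have I1 := HInv Qj Is.
have sub1 : forall z, Gd (st j s) z -> Gd s z.
  by move=> z /(Gd_fold_mono Qw I1) /Hsub.
move=> j' a; rewrite inE => /orP[/eqP->|j'w] ja.
  exact: Gd_ok Qj Is sub1 a ja.
apply: sub1; apply: (IH (st j s) Qw I1) j'w ja.
by move=> z /Hsub /(Gd_mono Qj Is).
Qed.
End GLemma.

Section Parts.
Variable n : nat.
Variable R : rel 'I_n.
Hypothesis HP : is_porder R.
Hypothesis Hforest : rooted_forest R.
Hypothesis Hnat : natural_labeling R.
Variable w : seq 'I_n.

Definition V y := has (fun j => R j y) w.

Lemma Vup a b : V a -> R a b -> V b.
Proof. by move=> /hasP[j jw ja] ab; apply/hasP; exists j => //; exact: (Rtrans HP ja ab). Qed.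

Lemma V_of j a : j \in w -> R j a -> V a.
Proof. by move=> jw ja; apply/hasP; exists j. Qed.

Lemma act_linext w' s : linext R s -> linext R (act R w' s).
Proof.
elim: w' s => [|j w' IH] s //= Ls; apply: IH; exact: hat_linext.
Qed.

Lemma act_cons j w' s : act R (j :: w') s = act R w' (hatpartial R j s).
Proof. by []. Qed.

Lemma act_nn w' s a b : linext R s -> (forall j, j \in w' -> ~~ R j a /\ ~~ R j b) ->
  bef (act R w' s) a b = bef s a b.
Proof.
elim: w' s => [|j w' IH] s //= Ls H.
rewrite IH ?hat_nn //; try by case: (H j (mem_head _ _)).
- exact: hat_linext.
- by move=> j' j'w; apply: H; rewrite inE j'w orbT.
Qed.

Definition GoodA s z := forall y, ~~ V y -> bef s y z.

Lemma partA s : linext R s -> act R w s = s ->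
  forall a y, V a -> ~~ V y -> bef s y a.
Proof.
move=> Ls Fs a y Va nVy.
have Q : all (fun j => j \in w) w by apply/allP.
case/hasP: Va => j jw ja.
have := @G_main n R HP Hnat (seq 'I_n) (fun j s => hatpartial R j s) (linext R) GoodA
  (fun j => j \in w).
move=> /(_ _ _ _ w s Q Ls) H.
suff HH : Gd R GoodA s a by exact: HH a (Rrefl HP a) y nVy.
apply: (H _ _ _ _ j a jw ja).
- by move=> j' s' _ L; apply: hat_linext.
- move=> j' s' z j'w L nz G y' nVy'.
  rewrite hat_nn //; first by apply: G.
  by apply: contra nVy' => jy; apply: V_of jy.
- move=> j' s' a' j'w L ja' G y' nVy'.
  have Va' : V a' := V_of j'w ja'.
  have ny : ~~ R j' y' by apply: contra nVy' => jy; apply: V_of jy.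
  have ya : y' != a' by apply: contraNneq nVy' => ->.
  have M : forall x, x \in hatpartial R j' s' by move=> x; apply: linext_mem; apply: hat_linext.
  rewrite bef_total ?M // (hat_cn HP Hforest Hnat) //.
  apply/negP=> /existsP[c /andP[ac cy]].
  have Vc : V c := Vup Va' (plt_R ac).
  have yc : y' != c by apply: contraNneq nVy' => ->.
  have := G c ac y' nVy'; rewrite bef_total ?(linext_mem _ L) //.
  by rewrite cy.
- by move=> z; rewrite /act in Fs; rewrite Fs.
Qed.

Definition GoodB (st : seq 'I_n * seq 'I_n) z :=
  forall y, y != z -> bef st.1 z y = bef st.2 z y.

Lemma fold_pair w' s t :
  foldl (fun st j => (hatpartial R j st.1, hatpartial R j st.2)) (s, t) w'
  = (act R w' s, act R w' t).
Proof. by elim: w' s t => [|j w' IH] s t //=; rewrite IH. Qed.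

Lemma partB s t : linext R s -> linext R t -> act R w s = s -> act R w t = t ->
  forall a y, V a -> y != a -> bef s a y = bef t a y.
Proof.
move=> Ls Lt Fs Ft a y Va ya.
have Q : all (fun j => j \in w) w by apply/allP.
case/hasP: Va => j jw ja.
have := @G_main n R HP Hnat (seq 'I_n * seq 'I_n)
  (fun j st => (hatpartial R j st.1, hatpartial R j st.2))
  (fun st => linext R st.1 /\ linext R st.2) GoodB (fun j => j \in w).
move=> /(_ _ _ _ w (s, t) Q (conj Ls Lt)) H.
suff HH : Gd R GoodB (s, t) a by exact: HH a (Rrefl HP a) y ya.
apply: (H _ _ _ _ j a jw ja).
- by move=> j' [s' t'] _ [L1 L2]; split; apply: hat_linext.
- move=> j' [s' t'] z j'w [L1 L2] nz G y' yz /=.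
  have M1 : forall x, x \in hatpartial R j' s' by move=> x; apply: linext_mem; apply: hat_linext.
  have M2 : forall x, x \in hatpartial R j' t' by move=> x; apply: linext_mem; apply: hat_linext.
  case: (boolP (R j' y')) => jy.
    rewrite bef_total ?M1 // 1?eq_sym // [RHS]bef_total ?M2 // 1?eq_sym //.
    rewrite !(hat_cn HP Hforest Hnat) //; congr negb.
    apply: eq_existsb => c; case yc: (plt R y' c) => //=.
    have cz : c != z.
      by apply: contraNneq nz => <-; exact: (Rtrans HP jy (plt_R yc)).
    rewrite bef_total ?(linext_mem _ L1) // [RHS]bef_total ?(linext_mem _ L2) //.
    by rewrite (G c).
  by rewrite !hat_nn //; apply: G.
- move=> j' [s' t'] a' j'w [L1 L2] ja' G y' ya' /=.
  case: (boolP (R j' y')) => jy.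
    rewrite !hat_cc //.
    have ay : a' != y' by rewrite eq_sym.
    case/orP: (chain_comp HP Hforest Hnat ja' jy) => H'.
      by rewrite (linext_comp L1 H' ay) (linext_comp L2 H' ay).
    rewrite bef_total ?(linext_mem _ L1) // [RHS]bef_total ?(linext_mem _ L2) //.
    by rewrite (linext_comp L1 H' ya') (linext_comp L2 H' ya').
  rewrite !(hat_cn HP Hforest Hnat) //.
  apply: eq_existsb => c; case ac: (plt R a' c) => //=.
  apply: G => //; apply: contraNneq jy => ->.
  exact: (Rtrans HP ja' (plt_R ac)).
- by move=> z; rewrite fold_pair Fs Ft.
Qed.

End Parts.


Lemma catsI (T : eqType) (s1 s2 s : seq T) : s1 ++ s = s2 ++ s -> s1 = s2.
Proof.
move=> E; have sz : size s1 = size s2.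
  by move: (congr1 size E); rewrite !size_cat => /eqP; rewrite eqn_add2r => /eqP.
by move/eqP: E; rewrite eqseq_cat // => /andP[/eqP].
Qed.

Lemma suffix_split (T : eqType) (u v X : seq T) : suffix u X -> suffix v X ->
  size v <= size u -> exists u', u = u' ++ v.
Proof.
move=> /suffixP[A EA] /suffixP[B EB] le.
exists (take (size u - size v) u).
have E : A ++ u = B ++ v by rewrite -EA -EB.
have E2 : B ++ v = A ++ u by [].
by rewrite {2}(suffix_same_len E2 le) cat_take_drop.
Qed.

Section Main.
Variable n : nat.
Variable R : rel 'I_n.
Hypothesis HP : is_porder R.
Hypothesis Hforest : rooted_forest R.
Hypothesis Hnat : natural_labeling R.
Variable w : seq 'I_n.
Hypothesis Hidem : idempotent_word R w.

Notation Vw := (V R w).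
Notation D := (predC (V R w)).

Lemma enum_linext : linext R (enum 'I_n).
Proof. split => // a b ab; rewrite !index_enum_ord; exact: Hnat. Qed.

Definition sig0 := act R w (enum 'I_n).
Definition v0 := filter Vw sig0.

Lemma L0 : linext R sig0. Proof. by apply: act_linext => //; apply: enum_linext. Qed.
Lemma F0 : act R w sig0 = sig0. Proof. exact: Hidem enum_linext. Qed.

Lemma formula p : linext R p -> act R w p = filter D p ++ v0.
Proof.
move=> Lp; set s := act R w p.
have Ls : linext R s by apply: act_linext.
have Fs : act R w s = s := Hidem Lp.
rewrite {1}(split_bef (P:=Vw) (linext_uniq Ls)); last first.
  by move=> y z _ _ ny vz; exact: (partA HP Hforest Hnat Ls Fs vz ny).
congr (_ ++ _).
- apply: eq_from_bef; rewrite ?filter_uniq ?(linext_uniq Ls) ?(linext_uniq Lp) //.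
    by move=> x; rewrite !mem_filter !(linext_mem _ Ls) !(linext_mem _ Lp).
  move=> a b; rewrite !mem_filter => /andP[Da _] /andP[Db _].
  rewrite !bef_filter // act_nn //.
  move=> j jw; split; [move: Da | move: Db]; apply: contra => jx; exact: V_of jw jx.
- apply: eq_from_bef; rewrite ?filter_uniq ?(linext_uniq Ls) ?(linext_uniq L0) //.
    by move=> x; rewrite !mem_filter !(linext_mem _ Ls) !(linext_mem _ L0).
  move=> a b; rewrite !mem_filter => /andP[Va _] /andP[Vb _].
  rewrite !bef_filter //; case: (eqVneq b a) => [->|ba]; first by rewrite !bef_irr.
  exact: (partB HP Hforest Hnat Ls L0 Fs F0 Va ba).
Qed.


Lemma inI_iff i : in_I R w i <->
  (forall p, linext R p -> filter D (hatpartial R i p) = filter D p).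
Proof.
split=> H p Lp.
  have Lh : linext R (hatpartial R i p) by apply: hat_linext.
  by apply: (@catsI _ _ _ v0); rewrite -!formula //; apply: H.
have Lh : linext R (hatpartial R i p) by apply: hat_linext.
by rewrite !formula // H.
Qed.

Lemma main (u : seq 'I_n) : is_rfactor R w u -> forall i, i \in u <-> in_I R w i.
Proof.
case=> Hcs Hmax.
have cs0 : common_suffix R w v0 by move=> p Lp; rewrite formula // suffix_suffix.
have [u' Eu] := suffix_split (Hcs _ enum_linext) (cs0 _ enum_linext) (Hmax _ cs0).
move=> i; rewrite inI_iff.
have L0 := L0.
case: (boolP (Vw i)) => Vi.
  have iu : i \in u by rewrite Eu mem_cat mem_filter Vi (linext_mem _ L0) orbT.
  split => // _ p Lp.
  have Lh : linext R (hatpartial R i p) by apply: hat_linext.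
  apply: eq_from_bef; rewrite ?filter_uniq ?(linext_uniq Lh) ?(linext_uniq Lp) //.
    by move=> x; rewrite !mem_filter !(linext_mem _ Lh) !(linext_mem _ Lp).
  move=> a b; rewrite !mem_filter => /andP[Da _] /andP[Db _].
  rewrite !bef_filter // hat_nn //.
  - by move: Da; apply: contra => ia; apply: Vup Vi ia.
  - by move: Db; apply: contra => ia; apply: Vup Vi ia.
split.
- move=> iu p Lp.
  have iu' : i \in u' by move: iu; rewrite Eu mem_cat mem_filter (negbTE Vi) /= orbF.
  have Hs : forall q, linext R q -> suffix u' (filter D q).
    move=> q Lq; have := Hcs q Lq; rewrite Eu formula // suffix_catl //.
    by case/andP.
  have Lh : linext R (hatpartial R i p) by apply: hat_linext.
  set k := index i p.
  have kp : k < size p by rewrite index_mem (linext_mem i Lp).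
  have Ep : p = take k p ++ i :: drop k.+1 p.
    by rewrite -{1}(cat_take_drop k p) (drop_nth i kp) nth_index // (linext_mem i Lp).
  have Eh := hat_eq Lp i; rewrite -/k in Eh.
  set pre := take k p in Ep Eh *; set r := drop k.+1 p in Ep Eh *.
  set d := filter D (i :: r); set g := filter D (bub R i r).
  have szg : size g = size d by apply: perm_size; apply: perm_filter; apply: bub_perm.
  have Et : filter D p = filter D pre ++ d by rewrite {1}Ep filter_cat.
  have Et' : filter D (hatpartial R i p) = filter D pre ++ g by rewrite Eh filter_cat.
  have [A EA] : exists A, filter D p = A ++ u' by apply/suffixP; apply: Hs.
  have [A' EA'] : exists A, filter D (hatpartial R i p) = A ++ u' by apply/suffixP; apply: Hs.
  have Ud : uniq d.
    have : uniq (filter D p) by rewrite filter_uniq // (linext_uniq Lp).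
    by rewrite Et cat_uniq => /and3P[].
  have dh : d = i :: filter D r by rewrite /d /= Vi.
  have szd : size d <= size u'.
    rewrite leqNgt; apply/negP => lt.
    have E0 : A ++ u' = filter D pre ++ d by rewrite -EA Et.
    have Eu'd := suffix_same_len E0 (ltnW lt).
    have kpos : 0 < size d - size u' by rewrite subn_gt0.
    move: Ud; rewrite -(cat_take_drop (size d - size u') d) -Eu'd cat_uniq => /and3P[_ /hasPn H _].
    have [m Em] : exists m, size d - size u' = m.+1.
      by exists (size d - size u').-1; rewrite prednK.
    have ht : i \in take (size d - size u') d by rewrite Em dh /= inE eqxx.
    by move: (H i iu'); rewrite ht.
  have E1 : filter D pre ++ d = A ++ u' by rewrite -Et.
  have E2 : filter D pre ++ g = A' ++ u' by rewrite -Et'.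
  have Ed := suffix_same_len E1 szd.
  have Eg := suffix_same_len E2 (leq_trans (eq_leq szg) szd).
  by rewrite Et Et' Ed Eg szg.
- move=> H.
  pose P := [pred y | D y && R i y].
  set c := filter P sig0.
  have Hc : forall p, linext R p -> suffix (c ++ v0) (act R w p).
    move=> p Lp; set s := act R w p.
    have Ls : linext R s by apply: act_linext.
    have Fs : act R w s = s := Hidem Lp.
    have Es : s = filter D s ++ v0 by rewrite -{1}Fs formula.
    rewrite Es suffix_catl // eqxx /=.
    have Hrel : forall a b, D a -> D b -> bef (hatpartial R i s) a b = bef s a b.
      by move=> a b Da Db; rewrite -(bef_filter _ Da Db) (H s Ls) bef_filter.
    have Hfwd : forall b, D b -> bef s i b -> R i b.
      move=> b Db ib; apply/negPn/negP => nib.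
      pose Q := [pred a | D a && R i a && bef s a b].
      have Qi : Q i by rewrite /= Vi (Rrefl HP i) ib.
      case: (arg_maxnP (fun a : 'I_n => nat_of_ord a) Qi) => M /andP[/andP[DM iM] Mb] Hm.
      have : bef (hatpartial R i s) M b by rewrite Hrel.
      rewrite (hat_cn HP Hforest Hnat Ls) // => /existsP[c' /andP[Mc cb]].
      have ic : R i c' := Rtrans HP iM (plt_R Mc).
      have Dc : D c'.
        apply/negP => Vc.
        have bc := partA HP Hforest Hnat Ls Fs Vc Db.
        have nbc : b != c' by apply: contraNneq Db => ->.
        by move: bc; rewrite bef_total ?(linext_mem _ Ls) // cb.
      have Qc : Q c' by apply/andP; split; first (apply/andP; split); done.
      by have := Hm c' Qc; rewrite /geq /= leqNgt (plt_lt Hnat Mc).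
    set k := index i s.
    have Us := linext_uniq Ls.
    rewrite -(cat_take_drop k s) filter_cat; apply: suffix_catr.
    have Edrop : filter D (drop k s) = filter P (drop k s).
      apply: eq_in_filter => y yd; rewrite /=.
      case Dy: (~~ Vw y) => //=; apply/esym.
      have ys := linext_mem y Ls.
      have nyt : y \notin take k s.
        move: Us; rewrite -{1}(cat_take_drop k s) cat_uniq => /and3P[_ /hasPn HH _].
        exact: HH.
      move: nyt; rewrite in_take // -leqNgt => ky.
      case: (eqVneq y i) => [->|yi]; first exact: Rrefl HP i.
      apply: Hfwd => //; rewrite /bef -/k ltn_neqAle ky andbT.
      apply: contra yi => /eqP E; apply/eqP.
      by rewrite -(nth_index i ys) -E nth_index // (linext_mem i Ls).
    have Etake : filter P (take k s) = [::].
      rewrite (eq_in_filter (a2 := pred0)) ?filter_pred0 // => y yt.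
      apply/negbTE/negP => /andP[_ iy].
      have := index_ltn yt.
      case: (eqVneq i y) => [<-|iy']; first by rewrite ltnn.
      have : bef s i y by apply: linext_bef Ls _; rewrite /plt iy' iy.
      rewrite /bef -/k => h1 h2.
      by have := ltn_trans h1 h2; rewrite ltnn.
    have -> : filter D (drop k s) = c.
      rewrite Edrop.
      have -> : filter P (drop k s) = filter P s.
        by rewrite -{2}(cat_take_drop k s) filter_cat Etake.
      apply: eq_from_bef; rewrite ?filter_uniq ?(linext_uniq Ls) ?(linext_uniq L0) //.
        by move=> x; rewrite !mem_filter !(linext_mem _ Ls) !(linext_mem _ L0).
      move=> a b; rewrite !mem_filter => /andP[/andP[Da ia] _] /andP[/andP[Db ib] _].
      have Pa : P a by apply/andP.
      have Pb : P b by apply/andP.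
      rewrite !bef_filter //.
      case: (eqVneq a b) => [->|ab]; first by rewrite !bef_irr.
      case/orP: (chain_comp HP Hforest Hnat ia ib) => H'.
        by rewrite (linext_comp Ls H' ab) (linext_comp L0 H' ab).
      have ba : b != a by rewrite eq_sym.
      rewrite bef_total ?(linext_mem _ Ls) // [RHS]bef_total ?(linext_mem _ L0) //.
      by rewrite (linext_comp Ls H' ba) (linext_comp L0 H' ba).
    exact: suffix_refl.
  have cs : common_suffix R w (c ++ v0) := Hc.
  have [u2 Eu2] := suffix_split (Hcs _ enum_linext) (Hc _ enum_linext) (Hmax _ cs).
  by rewrite Eu2 !mem_cat mem_filter /= Vi (Rrefl HP i) (linext_mem _ L0) /= orbT.
Qed.

End Main.


Unset Implicit Arguments.

Theorem lemma6p7 (n : nat) (R : rel 'I_n)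
    (HP : is_porder R) (Hforest : rooted_forest R) (Hnat : natural_labeling R)
    (w : seq 'I_n) (Hidem : idempotent_word R w)
    (u : seq 'I_n) (Hu : is_rfactor R w u) :
  forall i : 'I_n, i \in u <-> in_I R w i.
Proof.
exact: (main HP Hforest Hnat Hidem Hu).
Qed.
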